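(* Let $d\ge 2$ and $n\ge 2$ be integers. Let $R=\mathbb{Q}[a_{i,j}:1\le i,j\le n]$ be the polynomial ring in $n^2$ indeterminates, let $A$ be the $n\times n$ matrix with $A_{i,j}=a_{i,j}$, and let $f=(f_1,\dots,f_n)$ with $f_i=x_i-\big(\sum_{j=1}^n a_{i,j}x_j\big)^d\in R[x_1,\dots,x_n]$. Write \[ \mathrm{Jac}(f)=\det\Big(\frac{\partial f_i}{\partial x_j}\Big)_{1\le i,j\le n}=\sum_{\alpha} J_\alpha x^\alpha,\qquad J_\alpha\in R, \] over multi-degrees $\alpha\in\mathbb{Z}_{\ge0}^n$. For integers $1\le k\le n-1$ and $1\le l\le n$, let $\alpha(k,l)$ be the multi-degree with $\alpha_l=k(d-1)$ and $\alpha_i=0$ for $i\ne l$. Then \[ J_{\alpha(k,l)}=(-d)^k\sum_{1\le i_1<i_2<\cdots<i_k\le n}|A|_{(i_1,\ldots,i_k)}\prod_{r=1}^k a_{i_r,l}^{\,d-1}, \] where $|A|_{(i_1,\ldots,i_k)}$ denotes the principal minor of $A$ on rows and columns $i_1,\ldots,i_k$. *)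

(* Defs.v *)
From HB Require Import structures.
From mathcomp Require Import all_boot all_order all_algebra.
From mathcomp.multinomials Require Import mpoly.
Set Implicit Arguments. Unset Strict Implicit. Unset Printing Implicit Defensive.
Import GRing.Theory.
Local Open Scope ring_scope.

Definition Ra (n : nat) := {mpoly rat[n * n]}.

Definition avar (n : nat) (i j : 'I_n) : Ra n := 'X_(mxvec_index i j).

Definition Amx (n : nat) : 'M[Ra n]_n := \matrix_(i, j) avar i j.

Definition Rx (n : nat) := {mpoly (Ra n)[n]}.

Definition fpoly (n d : nat) (i : 'I_n) : Rx n :=
  'X_i - (\sum_(j < n) (avar i j)%:MP * 'X_j) ^+ d.

Definition jac (n d : nat) : Rx n :=
  \det (\matrix_(i, j) mderiv j (fpoly d i)).

Definition alpha (n d k : nat) (l : 'I_n) : 'X_{1..n} :=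
  [multinom (if i == l then (k * (d - 1))%N else 0%N) | i < n].

Definition incr (n k : nat) (s : {ffun 'I_k -> 'I_n}) : bool :=
  [forall i : 'I_k, forall j : 'I_k, (i < j)%N ==> (s i < s j)%N].

Definition pminor (n k : nat) (s : {ffun 'I_k -> 'I_n}) : Ra n :=
  \det (\matrix_(p, q) Amx n (s p) (s q)).

(* Main.v *)
Require Import Defs.
From HB Require Import structures.
From mathcomp Require Import all_boot all_order all_algebra.
From mathcomp.multinomials Require Import mpoly.
From mathcomp Require Import perm fingroup ring.
Set Implicit Arguments. Unset Strict Implicit. Unset Printing Implicit Defensive.
Import GRing.Theory.
Local Open Scope ring_scope.
Section Gen.
Variable R : comRingType.

Definition maskmx n (S : {set 'I_n}) (B : 'M[R]_n) : 'M[R]_n :=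
  \matrix_(i, j) if i \in S then B i j else (i == j)%:R.

Lemma det_perm_conj n (s : {perm 'I_n}) (B : 'M[R]_n) :
  \det (\matrix_(p, q) B (s p) (s q)) = \det B.
Proof.
have -> : (\matrix_(p, q) B (s p) (s q)) = row_perm s (col_perm s B).
  by apply/matrixP => i j; rewrite !mxE.
rewrite row_permE col_permE !det_mulmx !det_perm odd_permV mulrCA mulrA.
by rewrite -mulrA -expr2 sqrr_sign mulr1.
Qed.

Lemma det_mask k n (S : {set 'I_n}) (s : 'I_k -> 'I_n) (B : 'M[R]_n) :
  injective s -> S =i codom s ->
  \det (maskmx S B) = \det (\matrix_(p, q) B (s p) (s q)).
Proof.
move: k S s B; elim: n => [|n IH] k S s B.
  move=> _ _; case: k s => [|k] s; last by case: (s ord0).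
  by rewrite !det_mx00.
move=> sinj HS.
case: (pickP [pred i | i \notin S]) => [i /= iS | allS]; last first.
  have allS' : forall i, i \in S by move=> i; have := allS i; rewrite /=; case: (i \in S).
  have ek : k = n.+1.
    apply/eqP; rewrite eqn_leq; apply/andP; split.
      by have := leq_card s sinj; rewrite !card_ord.
    have -> : n.+1 = #|codom s|.
      by rewrite -[in LHS](card_ord n.+1); apply: eq_card => x; rewrite -HS allS'.
    by apply: leq_trans (card_size _) _; rewrite size_codom card_ord.
  subst k.
  have -> : maskmx S B = B by apply/matrixP => i j; rewrite mxE allS'.
  by rewrite -(det_perm_conj (perm sinj)); congr (\det _); apply/matrixP => i j; rewrite !mxE !permE.
rewrite (expand_det_row _ i) (bigD1 i) //= big1 ?addr0; last first.
  by move=> j /negPf ji; rewrite mxE (negPf iS) eq_sym ji mul0r.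
rewrite mxE (negPf iS) eqxx mul1r /cofactor addnn -signr_odd odd_double expr0 mul1r.
case: k s sinj HS => [|k] s sinj HS.
  have -> : row' i (col' i (maskmx S B)) = 1%:M.
    apply/matrixP => p q; rewrite !mxE.
    have -> : (lift i p \in S) = false.
      by rewrite HS; apply/negbTE/negP => /codomP [[x]].
    by rewrite (inj_eq (@lift_inj _ i)).
  by rewrite det1 det_mx00.
have [j0 _] : exists j0 : 'I_n, true.
  case: (unliftP i (s ord0)) => [j0 _ | e]; first by exists j0.
  by move: iS; rewrite HS -e codom_f.
pose s' (p : 'I_k.+1) := odflt j0 (unlift i (s p)).
have ls' p : lift i (s' p) = s p.
  rewrite /s'; case: (unliftP i (s p)) => [j -> // | e].
  by move: iS; rewrite HS -e codom_f.
have s'inj : injective s'.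
  by move=> p q e; apply: sinj; rewrite -!ls' e.
pose S' := [set q | lift i q \in S].
have -> : row' i (col' i (maskmx S B)) =
    maskmx S' (\matrix_(p, q) B (lift i p) (lift i q)).
  apply/matrixP => p q; rewrite !mxE inE (inj_eq (@lift_inj _ i)).
  by case: ifP => //; rewrite mxE.
rewrite (IH _ _ s') //; last first.
  move=> q; rewrite inE HS; apply/codomP/codomP => [[x ex]|[x ex]]; exists x.
    by apply: (@lift_inj _ i); rewrite ls'.
  by rewrite ex ls'.
by congr (\det _); apply/matrixP => p q; rewrite !mxE !ls'.
Qed.

End Gen.
Section Gen2.
Variable R : comRingType.

Lemma det_expand n (t : R) (B : 'M[R]_n) :
  \det (\matrix_(i, j) ((i == j)%:R - t * B i j)) =
  \sum_(S : {set 'I_n}) (-t) ^+ #|S| * \det (maskmx S B).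
Proof.
rewrite /determinant.
under [RHS]eq_bigr do rewrite mulr_sumr.
rewrite exchange_big /=; apply: eq_bigr => s _.
under eq_bigr do rewrite mxE addrC.
rewrite bigA_distr mulr_sumr; apply: eq_bigr => J _.
rewrite mulrCA; congr (_ * _).
rewrite (eq_bigr (fun i => (if i \in J then -t else 1) * maskmx J B i (s i))); last first.
  by move=> i _; rewrite mxE; case: (i \in J); rewrite ?mulNr ?mul1r.
rewrite big_split /=; congr (_ * _).
by rewrite -big_mkcond /= prodr_const.
Qed.

End Gen2.
Section Comb.

Definition ordlt n : rel 'I_n := fun x y => (x < y)%N.

Lemma sorted_enum_ord n : sorted (@ordlt n) (enum 'I_n).
Proof.
have := iota_ltn_sorted 0 n; rewrite -val_enum_ord sorted_map.
by apply: sub_sorted.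
Qed.

Lemma sorted_enum_set n (A : {set 'I_n}) : sorted (@ordlt n) (enum A).
Proof.
have -> : enum A = filter (mem A) (enum 'I_n) by rewrite enumT /enum_mem.
by apply: sorted_filter; [move=> x y z; apply: ltn_trans | apply: sorted_enum_ord].
Qed.

Lemma incr_inj n k (s : {ffun 'I_k -> 'I_n}) : incr s -> injective s.
Proof.
move=> /forallP inc p q e; apply/eqP/negPn/negP.
rewrite neq_ltn => /orP [] lt.
  by have := implyP (forallP (inc p) q) lt; rewrite e ltnn.
by have := implyP (forallP (inc q) p) lt; rewrite e ltnn.
Qed.

Lemma enum_codom n k (s : {ffun 'I_k -> 'I_n}) : incr s ->
  enum [set x in codom s] = codom s.
Proof.
move=> inc; apply: (@irr_sorted_eq _ (@ordlt n)).
- by move=> x y z; apply: ltn_trans.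
- by move=> x; apply: ltnn.
- exact: sorted_enum_set.
- rewrite codomE; apply: (homo_sorted (e := @ordlt k)); last exact: sorted_enum_ord.
  by move=> x y lt; apply: (implyP (forallP (forallP inc x) y)).
- by move=> x; rewrite mem_enum inE.
Qed.

Lemma sum_sets_incr (V : nmodType) n k (x0 : 'I_n) (G : {set 'I_n} -> V) :
  \sum_(S : {set 'I_n} | #|S| == k) G S =
  \sum_(s : {ffun 'I_k -> 'I_n} | incr s) G [set x in codom s].
Proof.
pose h (s : {ffun 'I_k -> 'I_n}) := [set x in codom s].
pose h' (S : {set 'I_n}) := [ffun p : 'I_k => nth x0 (enum S) p].
rewrite (reindex_onto h h'); last first.
  move=> S /eqP cS; apply/setP => x; rewrite inE; apply/codomP/idP => [[p ->]|xS].
    rewrite ffunE -mem_enum; apply: mem_nth; rewrite -cardE cS; exact: ltn_ord.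
  have lt : (index x (enum S) < k)%N by rewrite -cS cardE index_mem mem_enum.
  by exists (Ordinal lt); rewrite ffunE nth_index // mem_enum.
apply: eq_bigl => s; apply/andP/idP => [[/eqP cS /eqP es] | inc].
  rewrite -es; apply/forallP => p; apply/forallP => q; apply/implyP => lt.
  rewrite !ffunE; apply: (sorted_ltn_nth (leT := @ordlt n)) => //.
  - by move=> x y z; apply: ltn_trans.
  - exact: sorted_enum_set.
  - by rewrite inE -cardE cS ltn_ord.
  - by rewrite inE -cardE cS ltn_ord.
split.
  by rewrite /h cardsE card_codom ?card_ord //; apply: incr_inj.
apply/eqP/ffunP => p; rewrite ffunE /h enum_codom // codomE.
by rewrite (nth_map p) ?size_enum_ord ?ltn_ord // nth_ord_enum.
Qed.

End Comb.
Section Phi.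
Variables (n : nat) (l : 'I_n).

Definition hX (j : 'I_n) : {poly Ra n} := if j == l then 'X else 0.
Definition phi (p : Rx n) : {poly Ra n} := mmap (@polyC (Ra n)) hX p.

Definition alphaN (N : nat) : 'X_{1..n} :=
  [multinom (if i == l then N else 0%N) | i < n].

Lemma mmap1_coef (m : 'X_{1..n}) N :
  (mmap1 hX m)`_N = (m == alphaN N)%:R.
Proof.
rewrite /mmap1 (bigD1 l) //= {1}/hX eqxx.
case: (boolP [forall i, (i != l) ==> (m i == 0%N)]) => H.
  rewrite big1 ?mulr1; last first.
    by move=> i il; rewrite (eqP (implyP (forallP H i) il)) expr0.
  rewrite coefXn; suff -> : (N == m l) = (m == alphaN N) by [].
  apply/eqP/eqP => [e | ->]; last by rewrite mnmE eqxx.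
  apply/mnmP => i; rewrite mnmE; case: eqP => [->|/eqP ne]; first by rewrite e.
  exact/eqP/(implyP (forallP H i) ne).
have [i /andP [il mi]] : exists i, (i != l) && (m i != 0%N).
  move/forallPn: H => [i]; rewrite negb_imply => Hi; by exists i.
rewrite (bigD1 i) //= {1}/hX (negPf il) expr0n (negPf mi) mul0r mulr0 coef0.
case: eqP => // e; move: mi; rewrite e mnmE (negPf il) //.
Qed.

Lemma coef_phi (p : Rx n) N : (phi p)`_N = p@_(alphaN N).
Proof.
rewrite [in RHS](mpolyE p) [in LHS](mpolyE p) /phi raddf_sum coef_sum /=.
rewrite raddf_sum /=; apply: eq_bigr => m _.
by rewrite mmapZ mmapX coefCM mmap1_coef mcoeffZ mcoeffX.
Qed.

Lemma phiM (p q : Rx n) : phi (p * q) = phi p * phi q.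
Proof. by rewrite /phi rmorphM. Qed.
Lemma phiXn (p : Rx n) m : phi (p ^+ m) = phi p ^+ m.
Proof. by rewrite /phi rmorphXn. Qed.
Lemma phiB (p q : Rx n) : phi (p - q) = phi p - phi q.
Proof. by rewrite /phi rmorphB. Qed.
Lemma phi_nat m : phi m%:R = m%:R.
Proof. by rewrite /phi rmorph_nat. Qed.
Lemma phiC c : phi c%:MP = c%:P.
Proof. by rewrite /phi mmapC. Qed.
Lemma phi_det (M : 'M[Rx n]_n) : phi (\det M) = \det (map_mx phi M).
Proof. by rewrite /phi (det_map_mx (mmap (@polyC (Ra n)) hX) M). Qed.

End Phi.
Section Deriv.
Variables (n : nat).

Definition Lf (i : 'I_n) : Rx n := \sum_(j < n) (avar i j)%:MP * 'X_j.

Lemma mderiv_XU (i j : 'I_n) : mderiv j ('X_i : Rx n) = (i == j)%:R.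
Proof.
rewrite mderivX mnm1E; case: eqP => [->|_]; last by rewrite scale0r.
have -> : (U_(j) - U_(j))%MM = 0%MM :> 'X_{1..n}.
  by apply/mnmP => x; rewrite mnmBE subnn mnm0E.
by rewrite mpolyX0 scale1r.
Qed.

Lemma mderiv_pow (j : 'I_n) (p : Rx n) e :
  mderiv j (p ^+ e.+1) = e.+1%:R * p ^+ e * mderiv j p.
Proof.
elim: e => [|e IH]; first by rewrite expr1 expr0 mulr1 mul1r.
rewrite exprS mderivM IH.
set q := mderiv j p.
rewrite -!natr1 !exprS. ring.
Qed.

Lemma mderiv_L (i j : 'I_n) : mderiv j (Lf i) = (avar i j)%:MP.
Proof.
rewrite /Lf raddf_sum (bigD1 j) //= big1 ?addr0.
  by rewrite mderiv_mulC mderiv_XU eqxx mulr1.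
by move=> j' /negPf ne; rewrite mderiv_mulC mderiv_XU ne mulr0.
Qed.

Lemma entry_eq d (hd : (1 <= d)%N) (i j : 'I_n) :
  mderiv j (fpoly d i) = (i == j)%:R - d%:R * (Lf i) ^+ (d - 1) * (avar i j)%:MP.
Proof.
rewrite /fpoly mderivB mderiv_XU -/(Lf i).
case: d hd => [|d] // _; rewrite mderiv_pow mderiv_L subn1 /=.
by [].
Qed.

Lemma phi_L (l i : 'I_n) : phi l (Lf i) = (avar i l)%:P * 'X.
Proof.
rewrite /phi /Lf raddf_sum (bigD1 l) //= big1 ?addr0.
  by rewrite rmorphM /= mmapC mmapX mmap1U /hX eqxx.
by move=> j' ne; rewrite rmorphM /= mmapX mmap1U /hX (negPf ne) mulr0.
Qed.

End Deriv.
Theorem mainTheorem2 (d n : nat) (hd : (2 <= d)%N) (hn : (2 <= n)%N)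
  (k : nat) (hk1 : (1 <= k)%N) (hk2 : (k <= n - 1)%N) (l : 'I_n) :
  (jac n d)@_(alpha d k l) =
  (- (d%:R : Ra n)) ^+ k *
    \sum_(s : {ffun 'I_k -> 'I_n} | incr s)
       pminor s * \prod_(r < k) (avar (s r) l) ^+ (d - 1).
Proof.
set e := (d - 1)%N.
have he : (0 < e)%N by rewrite subn_gt0.
have -> : alpha d k l = alphaN l (k * e) by [].
rewrite -coef_phi /jac.
set M := \matrix_(i, j) _.
rewrite phi_det.
pose b : 'M[Ra n]_n := \matrix_(i, j) (d%:R * avar i l ^+ e * avar i j).
have -> : map_mx (phi l) M =
    \matrix_(i, j) ((i == j)%:R - 'X ^+ e * (map_mx polyC b) i j).
  apply/matrixP => i j; rewrite !mxE entry_eq; last exact: ltnW.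
  rewrite phiB phi_nat !phiM phi_nat phiXn phiC phi_L /e.
  rewrite !rmorphM /= rmorph_nat rmorphXn /=.
  rewrite exprMn; ring.
rewrite det_expand coef_sum.
have T : forall S : {set 'I_n},
    ((- 'X ^+ e) ^+ #|S| * \det (maskmx S (map_mx polyC b)))`_(k * e) =
    if #|S| == k then (-1) ^+ k * \det (maskmx S b) else 0.
  move=> S.
  have -> : maskmx S (map_mx polyC b) = map_mx polyC (maskmx S b).
    by apply/matrixP => i j; rewrite !mxE; case: (_ \in _) => //; rewrite rmorph_nat.
  rewrite det_map_mx /= -[- 'X ^+ e]mulN1r exprMn -exprM.
  set m := #|S|; set c := \det (maskmx S b).
  have -> : (-1) ^+ m * 'X ^+ (e * m) * c%:P = ((-1) ^+ m * c)%:P * 'X ^+ (e * m).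
    by rewrite rmorphM rmorphXn rmorphN rmorph1 /=; ring.
  rewrite coefCM coefXn; case: (boolP (m == k)) => [/eqP mk | mk].
    by rewrite mk mulnC eqxx mulr1.
  by rewrite mulnC eqn_pmul2l // eq_sym (negPf mk) mulr0.
under eq_bigr do rewrite T.
rewrite -big_mkcond /= -mulr_sumr.
rewrite (sum_sets_incr k l (fun S => \det (maskmx S b))).
have -> : (1 *- d : Ra n) ^+ k = (-1) ^+ k * d%:R ^+ k.
  by rewrite -[- _]mulN1r exprMn.
rewrite -[RHS]mulrA [in RHS]mulr_sumr -mulr_sumr; congr (_ * _).
rewrite mulr_sumr; apply: eq_bigr => s inc.
rewrite (det_mask (s := s) _ (incr_inj inc)); last by move=> x; rewrite inE.
have -> : (\matrix_(p, q) b (s p) (s q)) =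
    diag_mx (\row_p (d%:R * avar (s p) l ^+ e)) *m \matrix_(p, q) Amx n (s p) (s q).
  by apply/matrixP => p q; rewrite mul_diag_mx !mxE.
rewrite det_mulmx det_diag /pminor.
under eq_bigr do rewrite mxE.
rewrite big_split /= prodr_const card_ord.
ring.
Qed.
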